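(* Let $\Gamma$ be a connected directed graph of bounded degree and let $\nu$ be a quasi-cocycle on $\Gamma$ with constants $\Delta>0$, $\eta>0$. Suppose that for every arrow of $\Gamma$ starting at a vertex $v$ and ending at a vertex $u$ we have $\nu(v,u)>2\eta$. Then every (finite or infinite) directed path in $\Gamma$ is a $((\Delta+\eta)/\eta,1)$-quasi-geodesic.
   Context: Distances between vertices of a connected graph are combinatorial (the least number of edges in a connecting path). A function $\nu$ on pairs of vertices of a bounded degree graph $\Gamma$ is a quasi-cocycle with constants $\Delta>0$, $\eta>0$ if $|\nu(v_1,v_2)|\le\Delta$ for all adjacent vertices $v_1,v_2$ and $\nu(v_1,v_2)+\nu(v_2,v_3)-\eta\le\nu(v_1,v_3)\le\nu(v_1,v_2)+\nu(v_2,v_3)+\eta$ for all vertices $v_1,v_2,v_3$. A sequence of points $t_0,t_1,\ldots$ (finite or infinite) of a metric space is a $(\Lambda,\Delta')$-quasi-geodesic if $|t_i-t_{i+1}|\le\Delta'$ and $|i-j|\le\Lambda\cdot|t_i-t_j|$ for all indices $i,j$. A directed path is a sequence of vertices $x_1,x_2,\ldots$ such that each $(x_i,x_{i+1})$ is an arrow. *)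

(* Defs.v *)
From Stdlib Require Import Reals Lra Lia List ClassicalEpsilon.
Open Scope R_scope.

Definition adj {V : Type} (arr : V -> V -> Prop) (u v : V) : Prop :=
  arr u v \/ arr v u.

Inductive walk {V : Type} (arr : V -> V -> Prop) : V -> V -> nat -> Prop :=
| walk_nil : forall v, walk arr v v 0
| walk_cons : forall u w v n, adj arr u w -> walk arr w v n -> walk arr u v (S n).

Definition connected {V : Type} (arr : V -> V -> Prop) : Prop :=
  forall u v : V, exists n, walk arr u v n.

Definition bounded_degree {V : Type} (arr : V -> V -> Prop) : Prop :=
  exists D : nat, forall v : V,
    exists l : list V, (length l <= D)%nat /\ forall u, adj arr v u -> In u l.

Definition is_dist {V : Type} (arr : V -> V -> Prop) (u v : V) (n : nat) : Prop :=
  walk arr u v n /\ forall m, walk arr u v m -> (n <= m)%nat.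

(* The combinatorial distance (meaningful when the graph is connected). *)
Definition gdist {V : Type} (arr : V -> V -> Prop) (u v : V) : nat :=
  epsilon (inhabits 0%nat) (fun n => is_dist arr u v n).

Definition quasi_cocycle {V : Type} (arr : V -> V -> Prop) (nu : V -> V -> R)
    (Delta eta : R) : Prop :=
  (forall v1 v2, adj arr v1 v2 -> Rabs (nu v1 v2) <= Delta) /\
  (forall v1 v2 v3,
      nu v1 v2 + nu v2 v3 - eta <= nu v1 v3 /\
      nu v1 v3 <= nu v1 v2 + nu v2 v3 + eta).

(* A (finite or infinite) sequence: t : nat -> V with index domain
   {0,...,N} if len = Some N, and all of nat if len = None. *)
Definition in_dom (len : option nat) (i : nat) : Prop :=
  match len with
  | None => True
  | Some N => (i <= N)%nat
  end.

Definition directed_path {V : Type} (arr : V -> V -> Prop)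
    (t : nat -> V) (len : option nat) : Prop :=
  forall i, in_dom len (S i) -> arr (t i) (t (S i)).

Definition quasi_geodesic {V : Type} (arr : V -> V -> Prop)
    (Lambda Delta' : R) (t : nat -> V) (len : option nat) : Prop :=
  (forall i, in_dom len (S i) -> INR (gdist arr (t i) (t (S i))) <= Delta') /\
  (forall i j, in_dom len i -> in_dom len j ->
     Rabs (INR i - INR j) <= Lambda * INR (gdist arr (t i) (t j))).

(* Main.v *)
Require Import Defs.
From Stdlib Require Import Reals Lra Lia List Classical ClassicalEpsilon.
Open Scope R_scope.

Lemma walk_snoc {V : Type} (arr : V -> V -> Prop) u v w n :
  walk arr u v n -> adj arr v w -> walk arr u w (S n).
Proof.
  induction 1; intros Hvw.
  - apply walk_cons with w; [exact Hvw| constructor].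
  - apply walk_cons with w0; auto.
Qed.

Lemma walk_rev {V : Type} (arr : V -> V -> Prop) u v n :
  walk arr u v n -> walk arr v u n.
Proof.
  induction 1.
  - constructor.
  - apply walk_snoc with w; auto. unfold adj in *; tauto.
Qed.

Lemma exists_dist {V : Type} (arr : V -> V -> Prop) u v n :
  walk arr u v n -> exists m, is_dist arr u v m.
Proof.
  revert n. induction n as [n IH] using (well_founded_induction Wf_nat.lt_wf).
  intros Hw.
  destruct (classic (exists m, (m < n)%nat /\ walk arr u v m)) as [[m [Hm Hw']]|Hn].
  - exact (IH m Hm Hw').
  - exists n. split; auto. intros m Hm.
    destruct (Nat.le_gt_cases n m); auto. exfalso; apply Hn; eauto.
Qed.

Lemma gdist_spec {V : Type} (arr : V -> V -> Prop) u v n :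
  walk arr u v n -> is_dist arr u v (gdist arr u v).
Proof.
  intros Hw. unfold gdist. apply epsilon_spec. eapply exists_dist; eauto.
Qed.

Lemma in_dom_le len a b : in_dom len a -> (b <= a)%nat -> in_dom len b.
Proof. destruct len; simpl; auto; lia. Qed.

Lemma upper {V : Type} (arr : V -> V -> Prop) nu Delta eta :
  quasi_cocycle arr nu Delta eta ->
  forall u v n, walk arr u v n -> nu u v <= INR n * (Delta + eta) + eta.
Proof.
  intros [H1 H2]. induction 1.
  - simpl. destruct (H2 v v v). lra.
  - rewrite S_INR. destruct (H2 u w v). specialize (H1 _ _ H).
    pose proof (Rle_abs (nu u w)). lra.
Qed.

Lemma lower {V : Type} (arr : V -> V -> Prop) nu Delta eta t len :
  quasi_cocycle arr nu Delta eta ->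
  (forall v u, arr v u -> nu v u > 2 * eta) ->
  directed_path arr t len ->
  forall i k, in_dom len (i + S k)%nat ->
    nu (t i) (t (i + S k)%nat) >= INR (S k) * eta + eta.
Proof.
  intros [H1 H2] Hp Hd i k. induction k; intros Hk.
  - replace (i + 1)%nat with (S i) in * by lia. simpl.
    specialize (Hp _ _ (Hd i Hk)). lra.
  - replace (i + S (S k))%nat with (S (i + S k)) in * by lia.
    assert (IH := IHk (in_dom_le len _ (i + S k)%nat Hk ltac:(lia))).
    specialize (Hp _ _ (Hd _ Hk)).
    destruct (H2 (t i) (t (i + S k)%nat) (t (S (i + S k)))).
    rewrite (S_INR (S k)). lra.
Qed.

Theorem lemma1p2p14 (V : Type) (arr : V -> V -> Prop) (nu : V -> V -> R)
    (Delta eta : R) :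
  connected arr ->
  bounded_degree arr ->
  0 < Delta -> 0 < eta ->
  quasi_cocycle arr nu Delta eta ->
  (forall v u, arr v u -> nu v u > 2 * eta) ->
  forall (t : nat -> V) (len : option nat),
    directed_path arr t len ->
    quasi_geodesic arr ((Delta + eta) / eta) 1 t len.
Proof.
  intros Hc _ HD He Hq Hpos t len Hd. split.
  - intros i Hi.
    assert (W : walk arr (t i) (t (S i)) 1).
    { apply walk_cons with (t (S i)). left; apply Hd; auto. constructor. }
    destruct (gdist_spec _ _ _ _ W) as [_ Hm].
    specialize (Hm _ W). apply le_INR in Hm. simpl in Hm. lra.
  - assert (key : forall i j n, in_dom len j -> (i < j)%nat ->
      walk arr (t i) (t j) n ->
      INR j - INR i <= (Delta + eta) / eta * INR n).
    { intros i j n Hj Hij Hw.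
      destruct j as [|j']; [lia|].
      set (k := (j' - i)%nat).
      replace (S j') with (i + S k)%nat in * by (unfold k; lia).
      pose proof (lower _ _ _ _ _ _ Hq Hpos Hd i k Hj) as L.
      rewrite plus_INR.
      pose proof (upper _ _ _ _ Hq _ _ _ Hw) as U.
      assert (Hg : 0 <= INR n) by apply pos_INR.
      apply Rmult_le_reg_l with eta; auto.
      replace (eta * ((Delta + eta) / eta * INR n)) with (INR n * (Delta + eta)) by (field; lra).
      lra. }
    intros i j Hi Hj.
    destruct (Hc (t i) (t j)) as [n Hn].
    destruct (gdist_spec _ _ _ _ Hn) as [Hw _].
    assert (HL : 0 <= (Delta + eta) / eta * INR (gdist arr (t i) (t j))).
    { apply Rmult_le_pos; [apply Rlt_le, Rdiv_lt_0_compat; lra | apply pos_INR]. }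
    destruct (Nat.lt_total i j) as [Hij|[->|Hij]].
    + pose proof (key _ _ _ Hj Hij Hw). apply lt_INR in Hij.
      rewrite Rabs_left by lra. lra.
    + rewrite Rminus_diag, Rabs_R0. lra.
    + pose proof (key _ _ _ Hi Hij (walk_rev _ _ _ _ Hw)). apply lt_INR in Hij.
      rewrite Rabs_right by lra. lra.
Qed.
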